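(* Let $G$ be a finite group and let $\Omega$ be a connected component of $\mathcal{P}^*(G)$ which is a clique (its vertices are pairwise adjacent). Then there exist a prime $p\in\pi(G)$ and a cyclic $p$-subgroup $H$ of $G$ such that $\mathcal{P}^*(H)=\Omega$.
   Context: For a finite group $G$, the power graph $\mathcal{P}(G)$ is the simple undirected graph with vertex set $G$, two distinct vertices $x,y$ being adjacent iff $\langle x\rangle\subseteq\langle y\rangle$ or $\langle y\rangle\subseteq\langle x\rangle$. $\mathcal{P}^*(G)$ denotes the graph obtained from $\mathcal{P}(G)$ by deleting the vertex $1$ (for a subgroup $H$, $\mathcal{P}^*(H)$ is the corresponding graph on $H\setminus\{1\}$, a subgraph of $\mathcal{P}^*(G)$). $\pi(G)$ is the set of prime divisors of $|G|$. *)

(* Defs.v *)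
From mathcomp Require Import all_boot all_fingroup all_solvable.
Set Implicit Arguments. Unset Strict Implicit. Unset Printing Implicit Defensive.
Local Open Scope group_scope.

Definition power_adj (gT : finGroupType) : rel gT :=
  fun x y => (x != y) && ((<[x]> \subset <[y]>) || (<[y]> \subset <[x]>)).

Definition pstar_rel (gT : finGroupType) (G : {set gT}) : rel gT :=
  fun x y => [&& x \in G^#, y \in G^# & power_adj x y].

Definition pstar_component (gT : finGroupType) (G Omega : {set gT}) : Prop :=
  exists2 x, x \in G^# & Omega = [set y in G^# | connect (pstar_rel G) x y].

Definition power_clique (gT : finGroupType) (Omega : {set gT}) : Prop :=
  {in Omega &, forall x y, x != y -> power_adj x y}.

(* Main.v *)
Require Import Defs.
From mathcomp Require Import all_boot all_fingroup all_solvable.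

Local Open Scope group_scope.

Theorem lemma3p3 (gT : finGroupType) (G : {group gT}) (Omega : {set gT}) :
  pstar_component G Omega -> power_clique Omega ->
  exists p : nat, exists2 H : {group gT},
    [/\ prime p, p \in \pi(G), H \subset G, p.-group H & cyclic H] &
    H^# = Omega.
Proof.
move=> [x xG ->] cl.
set Om := [set y in G^# | connect (pstar_rel G) x y] in cl *.
have xOm : x \in Om by rewrite inE xG connect0.
case: (arg_maxnP (fun z => #[z]) xOm) => z zOm0 zmax.
have zOm : z \in Om := zOm0.
move: (zOm); rewrite /Om inE => /andP[zG1 cxz].
move: (zG1); rewrite !inE => /andP[nz1 zG].
have sZG : <[z]> \subset G by rewrite cycle_subG.
have eqOm : <[z]>^# = Om.
  apply/setP => y; apply/idP/idP.
  - rewrite !inE => /andP[ny1 yz].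
    have yG : y \in G by apply: (subsetP sZG).
    rewrite ny1 yG /=.
    case: (eqVneq y z) => [-> //|nyz].
    apply: connect_trans cxz (connect1 _).
    rewrite /pstar_rel /power_adj !inE nz1 zG ny1 yG eq_sym nyz /=.
    by rewrite [X in _ || X]cycle_subG yz orbT.
  - move=> yOm.
    move: (yOm); rewrite /Om inE => /andP[]; rewrite !inE => /andP[ny1 yG] _.
    rewrite ny1 /=.
    case: (eqVneq y z) => [-> | nyz]; first exact: cycle_id.
    move: (cl y z yOm zOm nyz); rewrite /power_adj nyz /= => /orP[yz|zy].
      by rewrite -cycle_subG.
    have := zmax y yOm => leyz.
    have : <[z]> == <[y]>.
      by rewrite eqEcard zy /=; exact: leyz.
    by move/eqP => ->; exact: cycle_id.
have ord1 : 1 < #[z] by rewrite ltn_neqAle eq_sym order_eq1 nz1 order_gt0.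
set p := pdiv #[z].
have pp : prime p by apply: pdiv_prime.
exists p; exists <[z]>%G => //.
split => //.
- rewrite mem_primes pp cardG_gt0 /=.
  exact: dvdn_trans (pdiv_dvd _) (order_dvdG zG).
- rewrite /pgroup; apply/pnatP; first exact: order_gt0.
  move=> q qp qd.
  have [a az ao] := Cauchy pp (pdiv_dvd #[z]).
  have [b bz bo] := Cauchy qp qd.
  have aOm : a \in Om.
    rewrite -eqOm !inE az andbT -order_eq1 ao.
    by apply/eqP => p1; rewrite p1 in pp.
  have bOm : b \in Om.
    rewrite -eqOm !inE bz andbT -order_eq1 bo.
    by apply/eqP => p1; rewrite p1 in qp.
  rewrite inE; apply/eqP.
  case: (eqVneq a b) => [eab | nab].
    by rewrite -bo -ao eab.
  move: (cl a b aOm bOm nab); rewrite /power_adj nab /= => /orP[ab|ba].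
    have := cardSg ab; rewrite -/(#[a]) -/(#[b]) ao bo dvdn_prime2 //.
    by move/eqP.
  have := cardSg ba; rewrite -/(#[a]) -/(#[b]) ao bo dvdn_prime2 //.
  by move/eqP.
- exact: cycle_cyclic.
Qed.
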